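(* Let $\eta>2$, $\lambda_b,\lambda_u>0$, $\bar\sigma_2^2>0$, $m>0$, $\theta>0$, $m_0=\lceil m\rceil$, $a_m=m\,\Gamma(1+m)^{-1/m}$, and for $k=1,\dots,m_0$ let $$H_k=\frac{4^{1/\eta}}{\sqrt\pi}\Gamma\!\left(1-\tfrac{2}{\eta}\right)\Gamma\!\left(\tfrac12+\tfrac{2}{\eta}\right)\left(\bar\sigma_2^2\frac{k a_m}{m\theta}\right)^{2/\eta},\qquad G_k(\tau)=\lambda_b+\lambda_u H_k\tau^{2/\eta}\ (\tau\ge0).$$ Define $$F_\gamma(\tau)=1-\lambda_b\sum_{k=1}^{m_0}(-1)^{k+1}\binom{m_0}{k}\frac{1}{G_k(\tau)}.$$ Then $$\lim_{\tau\to\infty}\Big[\log(1+\tau)F_\gamma(\tau)-\log(1+\tau)\Big]=0.$$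
   Context: $\Gamma$ is the Gamma function and $\lceil\cdot\rceil$ the ceiling. In the paper $F_\gamma$ is the (approximate) CDF of the SIR of uplink CUMA, with $\theta=\theta_S(1)$ the Gamma scale parameter of the desired signal power at unit distance; for the claim all listed quantities are arbitrary positive constants. *)

(* Defs.v *)
From Stdlib Require Import Reals Lra.
From Coquelicot Require Import Coquelicot.
Open Scope R_scope.

Definition Gamma (x : R) : R :=
  RInt_gen (fun t => Rpower t (x - 1) * exp (- t))
           (at_right 0) (Rbar_locally p_infty).

Definition ceil (x : R) : Z := (- Int_part (- x))%Z.

(* nonnegative-base real power, with 0^y = 0 (y > 0 in all uses) *)
Definition rpow (x y : R) : R := if Rle_dec x 0 then 0 else Rpower x y.

Definition a_m (m : R) : R := m * Rpower (Gamma (1 + m)) (- (1 / m)).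

Definition H_k (eta sigma2 m theta : R) (k : nat) : R :=
  Rpower 4 (1 / eta) / sqrt PI * Gamma (1 - 2 / eta) * Gamma (1/2 + 2 / eta)
  * Rpower (sigma2 * (INR k * a_m m / (m * theta))) (2 / eta).

Definition G_k (lb lu eta sigma2 m theta : R) (k : nat) (tau : R) : R :=
  lb + lu * H_k eta sigma2 m theta k * rpow tau (2 / eta).

Definition F_gamma (lb lu eta sigma2 m theta : R) (tau : R) : R :=
  let m0 := Z.to_nat (ceil m) in
  1 - lb * sum_n_m (fun k => (-1) ^ (k + 1) * Binomial.C m0 k
                              * / G_k lb lu eta sigma2 m theta k tau) 1 m0.

(* Main.v *)
Require Import Defs.
From Stdlib Require Import Reals Lra Lia Classical.
From Coquelicot Require Import Coquelicot.
Open Scope R_scope.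

Lemma exp_le_exp x y : x <= y -> exp x <= exp y.
Proof. intros [H|H]; [left; now apply exp_increasing| right; now subst]. Qed.

Lemma improper_pos (f : R -> R) (M : R) :
  (forall t, 0 < t -> 0 <= f t) ->
  (forall a b, 0 < a -> a <= b -> ex_RInt f a b) ->
  (forall a b, 0 < a -> a <= b -> RInt f a b <= M) ->
  0 < RInt f 1 2 ->
  exists l, 0 < l /\ is_RInt_gen f (at_right 0) (Rbar_locally p_infty) l.
Proof.
  intros Hpos Hex Hb H12.
  set (E := fun y => exists a b, 0 < a /\ a <= b /\ y = RInt f a b).
  assert (HE : bound E).
  { exists M. intros y [a [b [Ha [Hab ->]]]]. now apply Hb. }
  assert (HE1 : exists y, E y).
  { exists (RInt f 1 2). exists 1, 2. repeat split; lra. }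
  destruct (completeness E HE HE1) as [l [Hub Hlub]].
  assert (Hl12 : RInt f 1 2 <= l).
  { apply Hub. exists 1, 2. repeat split; lra. }
  exists l. split; [lra|].
  intros P [eps Heps].
  destruct (classic (exists y, E y /\ l - eps < y)) as [[y [[a1 [b1 [Ha1 [Hab1 ->]]]] Hy]] | Hn].
  2:{ exfalso. assert (l <= l - eps).
      { apply Hlub. intros y Hy. destruct (Rle_dec y (l - eps)); auto.
        exfalso; apply Hn; exists y; split; auto; lra. }
      destruct eps; simpl in *; lra. }
  apply Filter_prod with (Q := fun a => 0 < a <= a1) (R := fun b => b1 < b).
  - exists (mkposreal a1 Ha1). intros z Hz Hz1. simpl in Hz.
    unfold ball in Hz; simpl in Hz; unfold AbsRing_ball, abs, minus, plus, opp in Hz; simpl in Hz.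
    apply Rabs_def2 in Hz. lra.
  - exists b1. auto.
  - intros a b [Ha Ha1'] Hb1. exists (RInt f a b). split.
    + simpl. apply (@RInt_correct R_CompleteNormedModule), Hex; lra.
    + apply Heps.
      assert (Hsplit : RInt f a b = RInt f a a1 + RInt f a1 b1 + RInt f b1 b).
      { rewrite <- (RInt_Chasles f a a1 b) by (apply Hex; lra).
        rewrite <- (RInt_Chasles f a1 b1 b) by (apply Hex; lra).
        unfold plus; simpl. ring. }
      assert (0 <= RInt f a a1).
      { apply RInt_ge_0; [lra| apply Hex; lra | intros; apply Hpos; lra]. }
      assert (0 <= RInt f b1 b).
      { apply RInt_ge_0; [lra| apply Hex; lra | intros; apply Hpos; lra]. }
      assert (RInt f a b <= l).
      { apply Hub. exists a, b. repeat split; lra. }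
      unfold ball; simpl; unfold AbsRing_ball, abs, minus, plus, opp; simpl.
      apply Rabs_def1; lra.
Qed.

Lemma Rpower_cont y t : 0 < t -> continuous (fun s => Rpower s y) t.
Proof.
  intros Ht. apply (@ex_derive_continuous R_AbsRing R_NormedModule). exists (y * Rpower t (y - 1)).
  apply is_derive_Reals, derivable_pt_lim_power, Ht.
Qed.

Lemma gint_cont x t : 0 < t -> continuous (fun s => Rpower s (x - 1) * exp (- s)) t.
Proof.
  intros Ht. apply (continuous_mult (fun s => Rpower s (x - 1)) (fun s => exp (- s))).
  - now apply Rpower_cont.
  - apply (@ex_derive_continuous R_AbsRing R_NormedModule). auto_derive. auto.
Qed.

Lemma gint_ex x a b : 0 < a -> a <= b -> ex_RInt (fun s => Rpower s (x - 1) * exp (- s)) a b.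
Proof.
  intros Ha Hab. apply (@ex_RInt_continuous R_CompleteNormedModule). intros z Hz.
  rewrite Rmin_left in Hz by lra. apply gint_cont; lra.
Qed.

Definition gint x := fun s => Rpower s (x - 1) * exp (- s).

Lemma gint_nonneg x t : 0 < t -> 0 <= gint x t.
Proof. intros; unfold gint, Rpower. pose proof (exp_pos ((x-1) * ln t)); pose proof (exp_pos (-t)); nra. Qed.

Lemma gint_bound x a b : 0 < x <= 2 -> 0 < a -> a <= b -> RInt (gint x) a b <= /x + 2.
Proof.
  intros Hx Ha Hab.
  set (a' := Rmin a 1). set (b' := Rmax b 1).
  assert (Ha'1 : a' <= 1) by (unfold a'; apply Rmin_r).
  assert (Ha'a : a' <= a) by (unfold a'; apply Rmin_l).
  assert (Ha'0 : 0 < a') by (unfold a'; apply Rmin_glb_lt; lra).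
  assert (Hb'1 : 1 <= b') by (unfold b'; apply Rmax_r).
  assert (Hb'b : b <= b') by (unfold b'; apply Rmax_l).
  assert (HE : forall u v, 0 < u -> u <= v -> ex_RInt (gint x) u v) by (intros; now apply gint_ex).
  assert (H1 : RInt (gint x) a b <= RInt (gint x) a' b').
  { rewrite <- (RInt_Chasles (gint x) a' a b') by (apply HE; lra).
    rewrite <- (RInt_Chasles (gint x) a b b') by (apply HE; lra).
    assert (0 <= RInt (gint x) a' a).
    { apply RInt_ge_0; [lra| apply HE; lra | intros; apply gint_nonneg; lra]. }
    assert (0 <= RInt (gint x) b b').
    { apply RInt_ge_0; [lra| apply HE; lra | intros; apply gint_nonneg; lra]. }
    unfold plus; simpl. lra. }
  rewrite <- (RInt_Chasles (gint x) a' 1 b') in H1 by (apply HE; lra).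
  unfold plus in H1; simpl in H1.
  assert (H2 : RInt (gint x) a' 1 <= / x).
  { assert (HI : is_RInt (fun s => Rpower s (x - 1)) a' 1
                  (minus (/x * Rpower 1 x) (/x * Rpower a' x))).
    { apply (is_RInt_derive (V := R_CompleteNormedModule) (fun s => /x * Rpower s x)).
      - intros s Hs. rewrite Rmin_left in Hs by lra.
        replace (Rpower s (x - 1)) with (/x * (x * Rpower s (x - 1))) by (field; lra).
        apply is_derive_scal, is_derive_Reals, derivable_pt_lim_power; lra.
      - intros s Hs. rewrite Rmin_left in Hs by lra. apply Rpower_cont; lra. }
    assert (HL := is_RInt_le (gint x) _ a' 1 _ _ Ha'1
                  (RInt_correct (V := R_CompleteNormedModule) _ _ _ (HE a' 1 Ha'0 Ha'1)) HI).
    unfold minus, plus, opp in HL; simpl in HL.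
    assert (Hp1 : Rpower 1 x = 1) by (unfold Rpower; rewrite ln_1, Rmult_0_r; apply exp_0).
    rewrite Hp1 in HL.
    assert (0 < Rpower a' x) by apply exp_pos.
    assert (0 < / x) by (apply Rinv_0_lt_compat; lra).
    enough (RInt (gint x) a' 1 <= / x * 1 + - (/ x * Rpower a' x)) by nra.
    apply HL. intros s Hs. unfold gint.
    assert (0 < Rpower s (x - 1)) by apply exp_pos.
    assert (exp (- s) <= 1) by (rewrite <- exp_0; apply exp_le_exp; lra).
    nra. }
  assert (H3 : RInt (gint x) 1 b' <= 2).
  { assert (HI : is_RInt (fun s => s * exp (- s)) 1 b'
                  (minus (- (b' + 1) * exp (- b')) (- (1 + 1) * exp (- 1)))).
    { apply (is_RInt_derive (V := R_CompleteNormedModule) (fun s => - (s + 1) * exp (- s))).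
      - intros s Hs. auto_derive; auto. ring.
      - intros s Hs. apply (@ex_derive_continuous R_AbsRing R_NormedModule). auto_derive. auto. }
    assert (HL := is_RInt_le (gint x) _ 1 b' _ _ Hb'1
                  (RInt_correct (V := R_CompleteNormedModule) _ _ _ (HE 1 b' ltac:(lra) Hb'1)) HI).
    unfold minus, plus, opp in HL; simpl in HL.
    assert (0 < exp (- b')) by apply exp_pos.
    assert (exp (- 1) <= 1) by (rewrite <- exp_0; apply exp_le_exp; lra).
    enough (RInt (gint x) 1 b' <= - (b' + 1) * exp (- b') + - (- (1 + 1) * exp (- 1))) by nra.
    apply HL. intros s Hs. unfold gint.
    assert (Rpower s (x - 1) <= s).
    { rewrite <- (Rpower_1 s) at 2 by lra. apply Rle_Rpower; lra. }
    assert (0 < exp (- s)) by apply exp_pos.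
    nra. }
  lra.
Qed.

Lemma gint_12 x : 0 < x -> 0 < RInt (gint x) 1 2.
Proof.
  intros Hx. apply RInt_gt_0; [lra| |].
  - intros s Hs. unfold gint, Rpower. pose proof (exp_pos ((x-1) * ln s)); pose proof (exp_pos (-s)); nra.
  - intros s Hs. apply gint_cont; lra.
Qed.

Lemma Gamma_pos x : 0 < x <= 2 -> 0 < Gamma x.
Proof.
  intros Hx.
  destruct (improper_pos (gint x) (/x + 2)) as [l [Hl HI]].
  - intros; now apply gint_nonneg.
  - intros; now apply gint_ex.
  - intros; now apply gint_bound.
  - apply gint_12; lra.
  - unfold Gamma. rewrite (is_RInt_gen_unique (V := R_CompleteNormedModule)
      (Fa := at_right 0) (Fb := Rbar_locally p_infty) _ l); auto.
    all: apply Proper_StrongProper; first [apply at_right_proper_filter | apply Rbar_locally_filter].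
Qed.

Lemma lim_decay p K : 0 < p -> is_lim (fun t => K * exp (- (p/2) * ln t)) p_infty 0.
Proof.
  intros Hp.
  assert (H1 : is_lim (fun t => - (p/2) * ln t) p_infty m_infty).
  { assert (Hm : Rbar_mult (- (p/2)) p_infty = m_infty).
    { apply is_Rbar_mult_unique, is_Rbar_mult_sym, is_Rbar_mult_p_infty_neg. simpl. lra. }
    rewrite <- Hm. apply is_lim_scal_l, is_lim_ln_p. }
  assert (H2 : is_lim (fun t => exp (- (p/2) * ln t)) p_infty 0).
  { apply (is_lim_comp (fun y => exp y) (fun t => - (p/2) * ln t) p_infty 0 m_infty).
    - apply is_lim_exp_m.
    - exact H1.
    - exists 0. intros; discriminate. }
  replace (Finite 0) with (Rbar_mult K 0) by (simpl; f_equal; ring).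
  now apply is_lim_scal_l.
Qed.

Lemma term_lim lb A p : 0 < lb -> 0 < A -> 0 < p < 1 ->
  is_lim (fun t => ln (1 + t) / (lb + A * rpow t p)) p_infty 0.
Proof.
  intros Hlb HA Hp.
  set (K := (ln 2 + 2 / p) / A).
  apply (is_lim_le_le_loc (fun _ => 0) (fun t => K * exp (- (p/2) * ln t))).
  2: apply is_lim_const.
  2: now apply lim_decay.
  exists 1. intros t Ht.
  unfold rpow. destruct (Rle_dec t 0) as [Ht0|_]; [lra|].
  set (L := ln t).
  assert (HL : 0 < L) by (unfold L; rewrite <- ln_1; apply ln_increasing; lra).
  set (E2 := exp (p / 2 * L)).
  assert (HE : Rpower t p = E2 * E2) by (unfold Rpower, E2; rewrite <- exp_plus; f_equal; fold L; field).
  rewrite HE.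
  set (N := ln (1 + t)).
  assert (HN0 : 0 < N) by (unfold N; rewrite <- ln_1; apply ln_increasing; lra).
  assert (HN1 : N <= ln 2 + L).
  { unfold N, L. rewrite <- ln_mult by lra. apply ln_le; lra. }
  assert (HE2 : 1 + p / 2 * L <= E2) by apply exp_ineq1_le.
  assert (HE2p : 0 < E2) by apply exp_pos.
  assert (Hln2 : 0 < ln 2) by (rewrite <- ln_1; apply ln_increasing; lra).
  set (D := lb + A * (E2 * E2)).
  assert (HD : 0 < D) by (unfold D; nra).
  assert (Hkey : N * E2 <= K * D).
  { assert (N <= (ln 2 + 2 / p) * E2).
    { apply Rle_trans with (ln 2 + L); auto.
      apply Rle_trans with ((ln 2 + 2 / p) * (1 + p / 2 * L)).
      - assert (ln 2 + 2 / p + ln 2 * (p / 2) * L + L = (ln 2 + 2 / p) * (1 + p / 2 * L)) by (field; lra).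
        assert (0 < 2 / p) by (apply Rdiv_lt_0_compat; lra).
        assert (0 <= ln 2 * (p / 2) * L) by (apply Rmult_le_pos; [|lra]; nra).
        lra.
      - apply Rmult_le_compat_l; auto. assert (0 < 2 / p) by (apply Rdiv_lt_0_compat; lra). lra. }
    assert (K * D = (ln 2 + 2 / p) * (E2 * E2) + K * lb) by (unfold K, D; field; lra).
    assert (0 <= K * lb).
    { unfold K. assert (0 < 2 / p) by (apply Rdiv_lt_0_compat; lra).
      apply Rmult_le_pos; [|lra]. apply Rmult_le_pos; [lra|]. left; apply Rinv_0_lt_compat; lra. }
    nra. }
  split.
  - apply Rmult_le_pos; [lra| left; apply Rinv_0_lt_compat; lra].
  - replace (exp (- (p / 2) * L)) with (/ E2).
    2:{ unfold E2. rewrite <- exp_Ropp. f_equal. ring. }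
    replace (N / D) with ((N * E2) * / (D * E2)) by (field; lra).
    replace (K * / E2) with ((K * D) * / (D * E2)) by (field; lra).
    apply Rmult_le_compat_r; auto. left; apply Rinv_0_lt_compat; nra.
Qed.

Lemma sum_lim (g : nat -> R -> R) (n : nat) :
  (forall k, is_lim (g k) p_infty 0) ->
  is_lim (fun t => sum_n_m (fun k => g k t) 1 n) p_infty 0.
Proof.
  intros Hg. induction n as [|n IH].
  - apply (is_lim_ext (fun _ => 0)). intros; rewrite sum_n_m_zero; auto. apply is_lim_const.
  - apply (is_lim_ext (fun t => sum_n_m (fun k => g k t) 1 n + g (S n) t)).
    + intros t. rewrite sum_n_Sm by lia. reflexivity.
    + eapply is_lim_plus; [exact IH| apply Hg|]. simpl. replace 0 with (0 + 0) at 3 by ring. constructor.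
Qed.

Theorem lemma4 (eta lb lu sigma2 m theta : R)
  (Heta : 2 < eta) (Hlb : 0 < lb) (Hlu : 0 < lu) (Hs : 0 < sigma2)
  (Hm : 0 < m) (Htheta : 0 < theta) :
  is_lim (fun tau => ln (1 + tau) * F_gamma lb lu eta sigma2 m theta tau
                     - ln (1 + tau)) p_infty 0.
Proof.
  assert (Hp : 0 < 2 / eta < 1).
  { split. apply Rdiv_lt_0_compat; lra. apply (Rmult_lt_reg_r eta); [lra|]. field_simplify; lra. }
  assert (HG1 : 0 < Gamma (1 - 2 / eta)) by (apply Gamma_pos; lra).
  assert (HG2 : 0 < Gamma (1 / 2 + 2 / eta)) by (apply Gamma_pos; lra).
  assert (HH : forall k, 0 < H_k eta sigma2 m theta k).
  { intros k. unfold H_k.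
    assert (0 < Rpower 4 (1 / eta)) by apply exp_pos.
    assert (0 < sqrt PI) by (apply sqrt_lt_R0, PI_RGT_0).
    assert (0 < Rpower (sigma2 * (INR k * a_m m / (m * theta))) (2 / eta)) by apply exp_pos.
    assert (0 < Rpower 4 (1 / eta) / sqrt PI) by (apply Rdiv_lt_0_compat; lra).
    apply Rmult_lt_0_compat; [apply Rmult_lt_0_compat; [apply Rmult_lt_0_compat|]|]; assumption. }
  set (m0 := Z.to_nat (ceil m)).
  set (c := fun k => (-1) ^ (k + 1) * Binomial.C m0 k).
  apply (is_lim_ext (fun t => - lb * sum_n_m (fun k => c k * (ln (1 + t) / G_k lb lu eta sigma2 m theta k t)) 1 m0)).
  - intros t. unfold F_gamma. cbv zeta. fold m0.
    assert (Hsum : forall u n0, ln (1 + t) * sum_n_m u 1 n0 = sum_n_m (fun k => ln (1 + t) * u k) 1 n0)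
      by (intros; symmetry; apply (sum_n_m_mult_l (K := R_Ring))).
    match goal with |- _ * sum_n_m ?u _ _ = _ => set (S := sum_n_m u 1 m0) end.
    match goal with |- _ = _ * (_ - _ * sum_n_m ?u _ _) - _ => set (S' := sum_n_m u 1 m0) end.
    transitivity (- lb * (ln (1 + t) * S')); [|ring].
    unfold S', S. rewrite Hsum. f_equal. symmetry. apply sum_n_m_ext. intros k. match goal with |- ?a = ?b => change (@eq R a b) end. unfold c, Rdiv. ring.
  - replace (Finite 0) with (Rbar_mult (- lb) 0) by (simpl; f_equal; ring).
    apply is_lim_scal_l. apply (sum_lim (fun k t => c k * (ln (1 + t) / G_k lb lu eta sigma2 m theta k t))).
    intros k. replace (Finite 0) with (Rbar_mult (c k) 0) by (simpl; f_equal; ring).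
    apply is_lim_scal_l. unfold G_k.
    apply (is_lim_ext (fun t => ln (1 + t) / (lb + (lu * H_k eta sigma2 m theta k) * rpow t (2 / eta)))).
    + intros; f_equal.
    + apply term_lim; auto. apply Rmult_lt_0_compat; auto.
Qed.
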